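(* Let $n,m\in\mathbb{N}$. If $X\subseteq\mathbb{N}$ is finite, $(\omega^{n+m}+1)$-large and $\min X\ge3$, then there exists $Y\subseteq X$ such that $Y$ is $\omega^n$-large and $\omega^m$-sparse. In particular, if $X$ is finite, $(\omega^{n+3}+1)$-large and $\min X\ge 3$, then there exists $Y\subseteq X$ which is $\omega^n$-large and exp-sparse.
   Context: Ordinals below $\omega^\omega$ are in Cantor normal form; $\omega^j\cdot m$ = sum of $m$ copies of $\omega^j$. For $m\in\mathbb{N}$: $0[m]=0$, $(\beta+1)[m]=\beta$, $(\beta+\omega^{n})[m]=\beta+\omega^{n-1}\cdot m$ for $n\ge1$. A finite $X=\{x_0<\dots<x_{\ell-1}\}\subseteq\mathbb{N}$ is $\alpha$-large if $\alpha[x_0]\cdots[x_{\ell-1}]=0$. A set $X$ is $\alpha$-sparse if for all $x<y$ in $X$ the interval $(x,y]=\{z\in\mathbb{N}:x<z\le y\}$ is $\alpha$-large. A set $X$ with $\min X\ge3$ is exp-sparse if for all $x<y$ in $X$, $4^x<y$. *)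

(* Defs.v *)
From mathcomp Require Import all_boot.
Set Implicit Arguments. Unset Strict Implicit. Unset Printing Implicit Defensive.

(* Ordinals below omega^omega in Cantor normal form:
   the list [:: k_1; k_2; ...; k_r] with k_1 >= k_2 >= ... >= k_r
   denotes omega^k_1 + omega^k_2 + ... + omega^k_r; [::] denotes 0. *)
Definition cnf := seq nat.

Definition cnf_omega (k : nat) : cnf := [:: k].
Definition cnf_succ (a : cnf) : cnf := rcons a 0.

(* Fundamental sequence: 0[m] = 0, (b+1)[m] = b,
   (b + omega^(k+1))[m] = b + omega^k * m. *)
Definition fs (a : cnf) (m : nat) : cnf :=
  match rev a with
  | [::] => [::]
  | 0 :: r => rev r
  | k.+1 :: r => rev r ++ nseq m k
  end.

(* A finite set X = {x_0 < ... < x_{l-1}} is represented by its increasing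
   enumeration (a strictly increasing sequence). *)
Definition large (a : cnf) (X : seq nat) : bool :=
  foldl fs a X == [::].

Definition interval_oc (x y : nat) : seq nat := iota x.+1 (y - x).

Definition sparse (a : cnf) (X : seq nat) : Prop :=
  forall x y, x \in X -> y \in X -> x < y -> large a (interval_oc x y).

Definition exp_sparse (X : seq nat) : Prop :=
  (forall x, x \in X -> 3 <= x) /\
  (forall x y, x \in X -> y \in X -> x < y -> 4 ^ x < y).

(* Main.v *)
Require Import Defs.
From mathcomp Require Import all_boot.
From mathcomp Require Import zify.
From Stdlib Require Import Lia.
Set Implicit Arguments. Unset Strict Implicit. Unset Printing Implicit Defensive.

Fixpoint Rf (a : cnf) (q : nat) (L : seq nat) : option nat :=
  match a with
  | [::] => Some q
  | _ => match L with [::] => None | x :: L' => Rf (fs a x) x L' end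
  end.

Definition gt (q : nat) (X : seq nat) := [seq z <- X | q < z].
Definition R X a q := Rf a q (gt q X).
Definition shift (m : nat) (a : cnf) : cnf := [seq k + m | k <- a].

Lemma fs_rcons0 b x : fs (rcons b 0) x = b.
Proof. by rewrite /fs rev_rcons revK. Qed.
Lemma fs_rconsS b k x : fs (rcons b k.+1) x = b ++ nseq x k.
Proof. by rewrite /fs rev_rcons revK. Qed.
Lemma rcons_neq0 (b : cnf) k : rcons b k != [::].
Proof. by case: b. Qed.
Lemma fs_cat a b x : b != [::] -> fs (a ++ b) x = a ++ fs b x.
Proof.
case/lastP: b => [|b k] // _; rewrite -rcons_cat.
by case: k => [|k]; rewrite ?fs_rcons0 ?fs_rconsS ?catA.
Qed.
Lemma nseqSr n (v : nat) : nseq n.+1 v = rcons (nseq n v) v.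
Proof. by rewrite -addn1 nseqD cats1. Qed.
Lemma nseq_split x x' (j : nat) : x <= x' -> nseq x' j = nseq x j ++ nseq (x' - x) j.
Proof. by move=> h; rewrite -nseqD subnKC. Qed.

Lemma gt_cons X q x L : sorted ltn X -> gt q X = x :: L -> L = gt x X.
Proof.
rewrite /gt; elim: X => [|z Z IH] //= sX.
case: ifP => qz.
- case=> <- <-.
  have allZ : all (fun w => z < w) Z := order_path_min ltn_trans sX.
  have -> : [seq w <- Z | q < w] = Z.
    apply/all_filterP/allP=> w wZ; exact: ltn_trans qz ((allP allZ) w wZ).
  have -> : [seq w <- Z | z < w] = Z by apply/all_filterP; exact: allZ.
  by rewrite ltnn.
- move=> h; have allZ : all (fun w => z < w) Z := order_path_min ltn_trans sX.
  have xZ : x \in [seq w <- Z | q < w] by rewrite h inE eqxx.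
  rewrite mem_filter in xZ; case/andP: xZ => _ xZ.
  have zx := (allP allZ) x xZ.
  rewrite ltnNge (ltnW zx) /=.
  apply: IH => //; exact: path_sorted sX.
Qed.

Lemma R_nil X q : R X [::] q = Some q.
Proof. by rewrite /R; case: (gt q X). Qed.

Lemma R_cons X a q : sorted ltn X -> a != [::] ->
  R X a q = if gt q X is x :: _ then R X (fs a x) x else None.
Proof.
move=> sX; rewrite /R; case: a => [|k a] // _.
case E: (gt q X) => [|x L] //=. by rewrite -(gt_cons sX E).
Qed.

Lemma Rf_mem a q L r : Rf a q L = Some r -> if a is [::] then r = q else r \in L.
Proof.
elim: L a q => [|x L IH] [|k a] q //=; first by case.
  by case.
move=> h; have := IH _ _ h; case: (fs (k :: a) x) => [->|_ _]; rewrite inE ?eqxx //.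
by move=> ->; rewrite orbT.
Qed.

Lemma R_incr X a q r : R X a q = Some r -> q <= r /\ (a != [::] -> r \in X /\ q < r).
Proof.
rewrite /R => h; have := Rf_mem h; case: a h => [|k a] h.
  by move=> ->.
rewrite mem_filter => /andP[qr rX]; split; first exact: ltnW.
by [].
Qed.

Lemma gt_head_min X q x L z : sorted ltn X -> gt q X = x :: L -> z \in gt q X -> x <= z.
Proof.
move=> sX E; rewrite E inE => /orP[/eqP -> //|zL].
have sG : sorted ltn (gt q X) by apply: sorted_filter => //; exact: ltn_trans.
rewrite E /= in sG; have := order_path_min ltn_trans sG.
by move/allP/(_ z zL)/ltnW.
Qed.

Lemma size_gt_mono X q z : q <= z -> size (gt z X) <= size (gt q X).
Proof.
move=> qz; rewrite /gt !size_filter; apply: sub_count => w /= zw.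
exact: leq_ltn_trans qz zw.
Qed.

Lemma size_gt_lt X q z x : x \in X -> q < x -> x <= z -> size (gt z X) < size (gt q X).
Proof.
rewrite /gt; elim: X => //= w W IH; rewrite inE => /orP[/eqP ->|xW] qx xz.
- rewrite qx (ltnNge z w) xz /= ltnS !size_filter; apply: sub_count => v /= zv.
  exact: leq_ltn_trans (leq_trans (ltnW qx) xz) zv.
- have := IH xW qx xz.
  case: ifP => zw; case: ifP => qw /=; lia.
Qed.

Lemma gt_head_le X q q' x x' L L' : sorted ltn X -> q <= q' ->
  gt q X = x :: L -> gt q' X = x' :: L' -> x <= x'.
Proof.
move=> sX qq' E E'; apply: (gt_head_min sX E).
have : x' \in gt q' X by rewrite E' inE eqxx.
rewrite !mem_filter => /andP[q'x' ->]; rewrite andbT.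
exact: leq_ltn_trans qq' q'x'.
Qed.

Lemma gt_head_in X q x L : gt q X = x :: L -> x \in X /\ q < x.
Proof.
move=> E; have : x \in gt q X by rewrite E inE eqxx.
by rewrite mem_filter => /andP[].
Qed.

Lemma R_cat X a b q : sorted ltn X ->
  R X (a ++ b) q = if R X b q is Some z then R X a z else None.
Proof.
move=> sX.
move: {2}(size (gt q X)).+1 (ltnSn (size (gt q X))) => N.
elim: N a b q => // N IH a b q szq.
case: b => [|k b]; first by rewrite cats0 R_nil.
have ne1 : a ++ k :: b != [::] by case: a.
rewrite (R_cons _ sX ne1) (R_cons _ sX (isT : k :: b != [::])).
case E: (gt q X) => [|x L] //.
rewrite fs_cat //; apply: IH.
by rewrite -(gt_cons sX E); rewrite E /= ltnS in szq.
Qed.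

Lemma R_mono X : sorted ltn X -> forall N q, size (gt q X) < N ->
  forall a q' r', q <= q' -> R X a q' = Some r' -> exists2 r, R X a q = Some r & r <= r'.
Proof.
move=> sX; elim=> // N IH q szq a q' r' qq'.
case/lastP: a => [|b k].
  by rewrite !R_nil => -[<-]; exists q.
rewrite !(R_cons _ sX (rcons_neq0 b k)).
case E': (gt q' X) => [|x' L'] // Hr'.
have [x'X q'x'] := gt_head_in E'.
case E: (gt q X) => [|x L].
  have : x' \in gt q X by rewrite mem_filter x'X (leq_ltn_trans qq' q'x').
  by rewrite E.
have xx' := gt_head_le sX qq' E E'.
have szx : size (gt x X) < N by rewrite -(gt_cons sX E); rewrite E /= ltnS in szq.
case: k Hr' => [|j] Hr'.
  rewrite fs_rcons0 in Hr'; rewrite fs_rcons0; exact: IH x szx _ _ _ xx' Hr'.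
rewrite fs_rconsS in Hr'; rewrite fs_rconsS.
rewrite (nseq_split _ xx') catA R_cat // in Hr'.
case E2: (R X (nseq (x' - x) j) x') Hr' => [z|] // Hr'.
have [x'z _] := R_incr E2.
exact: IH x szx _ _ _ (leq_trans xx' x'z) Hr'.
Qed.

Lemma R_nseq X : sorted ltn X -> forall N q, size (gt q X) < N ->
  forall c c' k k' q' r', c <= c' -> k <= k' -> q <= q' ->
  R X (nseq c' k') q' = Some r' -> exists2 r, R X (nseq c k) q = Some r & r <= r'.
Proof.
move=> sX; elim=> // N IH q szq [|c] c' k k' q' r' cc' kk' qq' Hr'.
  exists q; first by rewrite R_nil.
  by have [] := R_incr Hr'; move=> h _; exact: leq_trans qq' h.
case: c' cc' Hr' => [|c'] // cc' Hr'; rewrite ltnS in cc'.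
rewrite nseqSr in Hr'; rewrite nseqSr.
rewrite (R_cons _ sX (rcons_neq0 _ _)) in Hr'; rewrite (R_cons _ sX (rcons_neq0 _ _)).
case E': (gt q' X) Hr' => [|x' L'] // Hr'.
have [x'X q'x'] := gt_head_in E'.
case E: (gt q X) => [|x L].
  have : x' \in gt q X by rewrite mem_filter x'X (leq_ltn_trans qq' q'x').
  by rewrite E.
have xx' := gt_head_le sX qq' E E'.
have [xX qx] := gt_head_in E.
have szx : size (gt x X) < N by rewrite -(gt_cons sX E); rewrite E /= ltnS in szq.
case: k kk' => [|k] kk'; case: k' kk' Hr' => [|k'] // kk' Hr'.
- rewrite fs_rcons0 in Hr'; rewrite fs_rcons0. exact: IH x szx _ _ _ _ _ _ cc' kk' xx' Hr'.
- rewrite fs_rcons0; rewrite fs_rconsS R_cat // in Hr'.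
  case E2: (R X (nseq x' k') x') Hr' => [z|] // Hr'.
  have [x'z _] := R_incr E2.
  exact: IH x szx _ _ _ _ _ _ cc' (leq0n _) (leq_trans xx' x'z) Hr'.
- rewrite fs_rconsS R_cat //; rewrite fs_rconsS R_cat // in Hr'.
  case E2: (R X (nseq x' k') x') Hr' => [z'|] // Hr'.
  have [z E3 zz'] := IH x szx x x' k k' x' z' xx' kk' xx' E2.
  rewrite E3.
  have [xz _] := R_incr E3.
  have szz : size (gt z X) < N := leq_ltn_trans (size_gt_mono X xz) szx.
  exact: IH z szz _ _ _ _ _ _ cc' kk' zz' Hr'.
Qed.

Lemma R_sub X X' : sorted ltn X -> sorted ltn X' -> forall N q, size (gt q X) < N ->
  forall a r, R X a q = Some r ->
  (forall z, z \in X -> q < z -> z <= r -> z \in X') ->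
  exists2 r', R X' a q = Some r' & r' <= r.
Proof.
move=> sX sX'; elim=> // N IH q szq a r Hr Hsub.
case/lastP: a Hr => [|b k] Hr.
  rewrite R_nil in Hr; case: Hr => <-; by exists q; rewrite ?R_nil.
rewrite (R_cons _ sX (rcons_neq0 _ _)) in Hr.
rewrite (R_cons _ sX' (rcons_neq0 _ _)).
case E: (gt q X) Hr => [|x L] // Hr.
have [xX qx] := gt_head_in E.
have [xr _] := R_incr Hr.
have szx : size (gt x X) < N by rewrite -(gt_cons sX E); rewrite E /= ltnS in szq.
have xX' : x \in gt q X' by rewrite mem_filter qx (Hsub x xX qx xr).
case E': (gt q X') => [|x' L']; first by rewrite E' in xX'.
have x'x := gt_head_min sX' E' xX'.
have [r1 H1 r1r] : exists2 r1, R X' (fs (rcons b k) x) x = Some r1 & r1 <= r.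
  apply: (IH x szx _ _ Hr) => z zX xz zr; apply: Hsub => //; exact: ltn_trans qx xz.
case: k H1 Hr => [|j] H1 Hr.
  rewrite fs_rcons0 in H1; rewrite fs_rcons0.
  have [r2 H2 r2r1] := R_mono sX' (ltnSn _) x'x H1.
  by exists r2 => //; exact: leq_trans r2r1 r1r.
rewrite fs_rconsS in H1; rewrite fs_rconsS.
rewrite (nseq_split _ x'x) catA R_cat // in H1.
case E2: (R X' (nseq (x - x') j) x) H1 => [w|] // H1.
have [xw _] := R_incr E2.
have [r2 H2 r2r1] := R_mono sX' (ltnSn _) (leq_trans x'x xw) H1.
by exists r2 => //; exact: leq_trans r2r1 r1r.
Qed.

Lemma foldl_fs_nil L : foldl fs [::] L = [::].
Proof. by elim: L. Qed.

Lemma large_Rf a q L : large a L = (Rf a q L != None).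
Proof.
rewrite /large; elim: L a q => [|x L IH] [|k a] q //=.
by rewrite foldl_fs_nil.
Qed.

Lemma gt_all q L : (forall z, z \in L -> q < z) -> gt q L = L.
Proof. by move=> h; apply/all_filterP/allP. Qed.

Lemma large_R L a q : (forall z, z \in L -> q < z) -> large a L = (R L a q != None).
Proof. by move=> h; rewrite /R gt_all // (large_Rf a q). Qed.

Lemma interval_sorted p y : sorted ltn (interval_oc p y).
Proof. exact: iota_ltn_sorted. Qed.

Lemma mem_interval p y z : (z \in interval_oc p y) = (p < z) && (z <= y).
Proof. rewrite /interval_oc mem_iota; apply/idP/idP => /andP[h1 h2]; apply/andP; lia. Qed.

Lemma interval_gt p y z : z \in interval_oc p y -> p < z.
Proof. by rewrite mem_interval => /andP[]. Qed.

Lemma large_interval_R X m p y : sorted ltn X -> R X [:: m] p = Some y ->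
  large [:: m] (interval_oc p y).
Proof.
move=> sX Hy.
have [r' H _] := R_sub sX (interval_sorted p y) (ltnSn _) Hy
  (fun z zX pz zy => (introT idP (etrans (mem_interval p y z) (introT andP (conj pz zy)))) ).
by rewrite (large_R _ (@interval_gt p y)) H.
Qed.

Lemma large_interval_ext m p y y' : large [:: m] (interval_oc p y) -> y <= y' ->
  large [:: m] (interval_oc p y').
Proof.
move=> H yy'.
rewrite (large_R _ (@interval_gt p y)) in H.
case E: (R (interval_oc p y) [:: m] p) H => [r|] // _.
have Hs : forall z, z \in interval_oc p y -> p < z -> z <= r -> z \in interval_oc p y'.
  move=> z; rewrite !mem_interval => /andP[h1 h2] _ _.
  by rewrite h1 (leq_trans h2 yy').
have [r' H _] := R_sub (interval_sorted p y) (interval_sorted p y') (ltnSn _) E Hs.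
by rewrite (large_R _ (@interval_gt p y')) H.
Qed.

Definition gap m a b := (a < b) && large [:: m] (interval_oc a b).

Lemma R_H X m : sorted ltn X -> forall g y x d k r, y <= x -> 0 < d -> m <= k ->
  R X (g ++ nseq d k) x = Some r -> exists r', R X (g ++ [:: m]) y = Some r'.
Proof.
move=> sX g y x d k r yx d0 mk; rewrite R_cat //.
case Ez: (R X (nseq d k) x) => [z|] // Hr.
have [w Hw wz] := R_nseq sX (ltnSn (size (gt y X))) d0 mk yx Ez.
have [r2 H2 _] := R_mono sX (ltnSn (size (gt w X))) wz Hr.
exists r2; rewrite R_cat //.
by rewrite /= in Hw; rewrite Hw.
Qed.

Lemma shift_cat m a b : shift m (a ++ b) = shift m a ++ shift m b.
Proof. by rewrite /shift map_cat. Qed.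
Lemma shift_nseq m c k : shift m (nseq c k) = nseq c (k + m).
Proof. by rewrite /shift map_nseq. Qed.

Lemma mainA X m : sorted ltn X -> forall N p, size (gt p X) < N ->
  forall a r, R X (shift m a ++ [:: m]) p = Some r ->
  exists Y, [/\ path (gap m) p Y, {subset Y <= X} & large a Y].
Proof.
move=> sX; elim=> // N IH p szp a r.
case/lastP: a => [|b k] Hr.
  by exists [::]; split.
rewrite /shift map_rcons -/(shift m b) R_cat // in Hr.
case Ey: (R X [:: m] p) Hr => [y|] // Hr.
have [_ /(_ isT) [yX py]] := R_incr Ey.
have gpy : gap m p y by rewrite /gap py (large_interval_R sX Ey).
have szy : size (gt y X) < N.
  by have := size_gt_lt yX py (leqnn y); move=> h; exact: leq_trans h szp.
case: k Hr => [|j] Hr.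
  rewrite add0n -cats1 in Hr.
  have [Y' [P1 P2 P3]] := IH y szy b r Hr.
  exists (y :: Y'); split => //=.
  - by rewrite gpy P1.
  - by move=> z; rewrite inE => /orP[/eqP ->|/P2].
  - by rewrite /large /= fs_rcons0.
rewrite addSn (R_cons _ sX (rcons_neq0 _ _)) in Hr.
case E: (gt y X) Hr => [|x L] // Hr.
have [xX yx] := gt_head_in E.
rewrite fs_rconsS (nseq_split _ (ltnW yx)) catA in Hr.
have d0 : 0 < x - y by rewrite subn_gt0.
have [r2 H2] := R_H sX (ltnW yx) d0 (leq_addl j m) Hr.
have Eg : shift m b ++ nseq y (j + m) = shift m (b ++ nseq y j).
  by rewrite shift_cat shift_nseq.
rewrite Eg in H2.
have [Y' [P1 P2 P3]] := IH y szy _ _ H2.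
exists (y :: Y'); split => //=.
- by rewrite gpy P1.
- by move=> z; rewrite inE => /orP[/eqP ->|/P2].
- by rewrite /large /= fs_rconsS.
Qed.

Lemma gap_first m p Y : path (gap m) p Y -> forall y, y \in Y ->
  p < y /\ large [:: m] (interval_oc p y).
Proof.
elim: Y p => [|y0 Y IH] p //= /andP[/andP[py0 L0] P] y.
rewrite inE => /orP[/eqP ->|yY]; first by [].
have [y0y L1] := IH _ P y yY.
split; first exact: ltn_trans py0 y0y.
exact: large_interval_ext L0 (ltnW y0y).
Qed.

Lemma gap_sparse m p Y : path (gap m) p Y -> forall x y, x \in p :: Y -> y \in p :: Y ->
  x < y -> large [:: m] (interval_oc x y).
Proof.
elim: Y p => [|y0 Y IH] p.
  by move=> _ x y; rewrite !inE => /eqP -> /eqP ->; rewrite ltnn.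
move=> P x y; rewrite inE => /orP[/eqP ->|xY] yin py.
  move: yin; rewrite inE => /orP[/eqP yp|yY]; first by rewrite yp ltnn in py.
  by have [] := gap_first P yY.
move: P => /= /andP[g0 P].
move: yin; rewrite inE => /orP[/eqP yp|yY].
  have Pf : path (gap m) p (y0 :: Y) by rewrite /= g0 P.
  have [px _] := gap_first Pf xY.
  by rewrite yp in py; have := ltn_trans px py; rewrite ltnn.
exact: IH P x y xY yY py.
Qed.

Lemma B0 X c q r : sorted ltn X -> R X (nseq c 0) q = Some r -> q + c <= r.
Proof.
move=> sX; elim: c q r => [|c IH] q r.
  by rewrite R_nil addn0 => -[->].
rewrite nseqSr -cats1 R_cat //.
case E: (R X [:: 0] q) => [w|] // H.
have [_ /(_ isT) [_ qw]] := R_incr E.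
have := IH _ _ H; lia.
Qed.

Lemma B1 X q r : sorted ltn X -> R X [:: 1] q = Some r -> 2 * q + 2 <= r.
Proof.
move=> sX; rewrite (R_cons _ sX (isT : [:: 1] != [::])).
case E: (gt q X) => [|x L] // H.
have [_ qx] := gt_head_in E.
have := B0 sX H; lia.
Qed.

Lemma B1c X c q r : sorted ltn X -> R X (nseq c 1) q = Some r -> 2 ^ c * q <= r.
Proof.
move=> sX; elim: c q r => [|c IH] q r.
  by rewrite R_nil mul1n => -[->].
rewrite nseqSr -cats1 R_cat //.
case E: (R X [:: 1] q) => [w|] // H.
have h1 := B1 sX E; have h2 := IH _ _ H.
rewrite expnS (mulnC 2) -mulnA; apply: leq_trans h2; apply: leq_mul => //; lia.
Qed.

Lemma B2 X q r : sorted ltn X -> R X [:: 2] q = Some r -> 2 ^ q.+1 <= r.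
Proof.
move=> sX; rewrite (R_cons _ sX (isT : [:: 2] != [::])).
case E: (gt q X) => [|x L] // H.
have [_ qx] := gt_head_in E.
have h := B1c sX H.
apply: leq_trans h; apply: leq_trans (leq_pmulr _ (leq_trans (ltn0Sn q) qx)).
by rewrite leq_exp2l.
Qed.

Lemma B3 X q r : sorted ltn X -> 1 <= q -> R X [:: 3] q = Some r -> 4 ^ q < r.
Proof.
move=> sX q1; rewrite (R_cons _ sX (isT : [:: 3] != [::])).
case E: (gt q X) => [|x L] // H.
have [_ qx] := gt_head_in E.
have x2 : 2 <= x by apply: leq_trans qx; rewrite ltnS.
rewrite /fs /= in H.
rewrite (nseq_split _ x2) R_cat // in H.
case E0: (R X (nseq (x - 2) 2) x) H => [z|] // H.
have [xz _] := R_incr E0.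
rewrite (_ : nseq 2 2 = [:: 2] ++ [:: 2]) // R_cat // in H.
case E1: (R X [:: 2] z) H => [w1|] // H.
case E2: (R X [:: 2] w1) H => [w2|] // H.
have h1 := B2 sX E1; have h2 := B2 sX E2.
have h3 : w2 <= r by case: H => ->.
have e4 : 4 ^ q = 2 ^ (2 * q) by rewrite expnM.
rewrite e4; apply: leq_trans h3; apply: leq_trans h2.
rewrite ltn_exp2l // ltnS.
apply: leq_trans h1.
have := ltn_expl x (isT : 1 < 2).
have : 2 ^ x.+1 <= 2 ^ z.+1 by rewrite leq_exp2l.
move=> hz hx; rewrite expnS in hz; lia.
Qed.

Lemma exp_bound x y : 1 <= x -> large [:: 3] (interval_oc x y) -> 4 ^ x < y.
Proof.
move=> x1; rewrite (large_R _ (@interval_gt x y)).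
case E: (R (interval_oc x y) [:: 3] x) => [r|] // _.
have [_ /(_ isT) [rI _]] := R_incr E.
have := B3 (interval_sorted x y) x1 E.
move: rI; rewrite mem_interval => /andP[_ ry] h.
exact: leq_trans h ry.
Qed.

Lemma part1 n m X : sorted ltn X -> large (cnf_succ (cnf_omega (n + m))) X ->
  exists Y : seq nat, [/\ sorted ltn Y, {subset Y <= X},
                        large (cnf_omega n) Y & sparse (cnf_omega m) Y].
Proof.
case: X => [|x0 X'] // sX Hl.
rewrite /large /= /fs /= in Hl.
have allX' : forall z, z \in X' -> x0 < z.
  by move=> z zX; exact: (allP (order_path_min ltn_trans sX)) z zX.
have Hgt : gt x0 (x0 :: X') = X'.
  by rewrite /gt /= ltnn; apply/all_filterP/allP.
have HR : R (x0 :: X') [:: n + m] x0 != None.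
  by rewrite /R Hgt -(large_Rf _ x0 X').
clear Hl; case: n HR => [|n1] HR.
  exists [:: x0]; split => //.
  - by move=> z; rewrite inE => /eqP ->; rewrite inE eqxx.
  - by move=> x y; rewrite !inE => /eqP -> /eqP ->; rewrite ltnn.
case ER: (R (x0 :: X') [:: n1.+1 + m] x0) HR => [r|] // _.
rewrite addSn (R_cons _ sX (isT : [:: (n1 + m).+1] != [::])) in ER.
case E1: (gt x0 (x0 :: X')) ER => [|x1 X''] // ER.
have [_ x01'] := gt_head_in E1.
have x01 := ltnW x01'.
rewrite /fs /= in ER.
rewrite (nseq_split _ x01) in ER.
have d0 : 0 < x1 - x0 by rewrite subn_gt0.
have [r2 H2] := R_H sX x01 d0 (leq_addl n1 m) ER.
rewrite -shift_nseq in H2.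
have [Y' [P1 P2 P3]] := mainA sX (ltnSn _) H2.
exists (x0 :: Y'); split.
- by rewrite /=; apply: sub_path P1 => a b /andP[].
- by move=> z; rewrite inE => /orP[/eqP ->|/P2]; rewrite ?inE ?eqxx.
- by rewrite /large /= /fs /=.
- move=> x y; exact: gap_sparse P1 x y.
Qed.

Theorem lemma2p1 (n m : nat) :
  (forall X : seq nat, sorted ltn X ->
     large (cnf_succ (cnf_omega (n + m))) X ->
     (forall x, x \in X -> 3 <= x) ->
     exists Y : seq nat, [/\ sorted ltn Y, {subset Y <= X},
                           large (cnf_omega n) Y & sparse (cnf_omega m) Y])
  /\
  (forall X : seq nat, sorted ltn X ->
     large (cnf_succ (cnf_omega (n + 3))) X ->
     (forall x, x \in X -> 3 <= x) ->
     exists Y : seq nat, [/\ sorted ltn Y, {subset Y <= X},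
                           large (cnf_omega n) Y & exp_sparse Y]).
Proof.
split=> X sX Hl H3; first exact: part1.
have [Y [P1 P2 P3 P4]] := part1 sX Hl.
exists Y; split => //; split.
- by move=> x /P2 /H3.
- move=> x y xY yY xy; apply: exp_bound (P4 x y xY yY xy).
  by apply: leq_trans (H3 x (P2 x xY)).
Qed.
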